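(* Let $n\ge 1$ and let $F$ be a permutation of $\mathbb{F}_{2^n}$ such that $F(x)=\mathrm{Inv}(x)$ for all $x\in\mathbb{F}_{2^n}\setminus P$, for some nonempty subset $P\subseteq\mathbb{F}_{2^n}$ with $0\in P$. If $c\in\mathbb{F}_{2^n}$ and $c\neq1$, then ${}_c\Delta_F\le \#P+2$.
   Context: $\mathrm{Inv}$ is the multiplicative inverse function on $\mathbb{F}_{2^n}$: $\mathrm{Inv}(x)=x^{2^n-2}$, so $\mathrm{Inv}(x)=x^{-1}$ for $x\neq0$ and $\mathrm{Inv}(0)=0$. For $F:\mathbb{F}_{2^n}\to\mathbb{F}_{2^n}$ and $c\in\mathbb{F}_{2^n}$, ${}_cD_aF(x)=F(x+a)+cF(x)$. For $a,b\in\mathbb{F}_{2^n}$, ${}_c\Delta_F(a,b)$ is the number of $x\in\mathbb{F}_{2^n}$ with ${}_cD_aF(x)=b$, and ${}_c\Delta_F=\max\{{}_c\Delta_F(a,b): a,b\in\mathbb{F}_{2^n},\ a\neq 0 \text{ if } c=1\}$. *)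

(* Defs.v *)
(* F_{2^n} is modeled as an arbitrary finite field K with #|K| = 2^n. *)
From mathcomp Require Import all_boot all_order all_algebra.
Set Implicit Arguments. Unset Strict Implicit. Unset Printing Implicit Defensive.
Import GRing.Theory.
Local Open Scope ring_scope.

Definition Inv (K : finFieldType) (n : nat) (x : K) : K := x ^+ (2 ^ n - 2)%N.

Definition cDer (K : finFieldType) (c a : K) (F : K -> K) (x : K) : K :=
  F (x + a) + c * F x.

Definition cDeltaAB (K : finFieldType) (c : K) (F : K -> K) (a b : K) : nat :=
  #|[set x : K | cDer c a F x == b]|.

Definition cDelta (K : finFieldType) (c : K) (F : K -> K) : nat :=
  \max_(ab : K * K | (c != 1) || (ab.1 != 0)) cDeltaAB c F ab.1 ab.2.

(* Main.v *)
Require Import Defs.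
From mathcomp Require Import all_boot all_order all_algebra finfield.
From mathcomp Require Import ring zify.
Local Open Scope ring_scope.
Import GRing.Theory.

Lemma char2_K (K : finFieldType) (n : nat) (hn : (1 <= n)%N)
  (hK : #|K| = (2 ^ n)%N) : (2%:R : K) = 0.
Proof. exact: pcharf0 (card_finPcharP hK (isT : prime 2)). Qed.

Lemma Inv_nz (K : finFieldType) (n : nat) (hn : (1 <= n)%N)
  (hK : #|K| = (2 ^ n)%N) (x : K) : x != 0 -> Inv n x = x^-1.
Proof.
move=> x0; rewrite /Inv.
have e : #|K| = (2 ^ n - 2).+2.
  rewrite hK; have : (2 <= 2 ^ n)%N.
    by rewrite -{1}(expn1 2) leq_exp2l.
  lia.
have := expf_card x; rewrite e !exprSr => h.
have h1 : x ^+ (2 ^ n - 2) * x = 1.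
  by apply: (mulIf x0); rewrite mul1r.
by rewrite -[LHS](mulfK x0) h1 mul1r.
Qed.

Theorem mainTheorem3 (K : finFieldType) (n : nat) (hn : (1 <= n)%N)
  (hK : #|K| = (2 ^ n)%N) (F : K -> K) (hF : bijective F) (P : {set K})
  (hP0 : P != set0) (h0P : 0 \in P)
  (hFP : forall x : K, x \notin P -> F x = Inv n x)
  (c : K) (hc : c != 1) :
  (cDelta c F <= #|P| + 2)%N.
Proof.
have two := @char2_K _ _ hn hK.
have aa : forall x a : K, x + a + a = x.
  by move=> x a; rewrite -addrA -mulr2n -mulr_natr two mulr0 addr0.
have c1 : 1 - c != 0.
  by rewrite subr_eq0 eq_sym.
have c1' : 1 + c != 0.
  apply: contra c1 => /eqP h; apply/eqP.
  have -> : c = - 1 by apply/eqP; rewrite -addr_eq0 addrC h.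
  by rewrite opprK -mulr2n two.
apply/bigmax_leqP => [[a b]] _ /=.
rewrite /cDeltaAB.
set T := [set x | cDer c a F x == b].
have key : forall x, cDer c a F x == b -> cDer c a F (x + a) == b -> a = 0.
  move=> x; rewrite /cDer aa => /eqP e1 /eqP e2.
  have : (F (x + a) - F x) * (1 - c) = 0.
    have -> : (F (x + a) - F x) * (1 - c) = (F (x+a) + c * F x) - (F x + c * F (x+a)) by ring.
    by rewrite e1 e2 subrr.
  move/eqP; rewrite mulf_eq0 (negbTE c1) orbF subr_eq0 => /eqP.
  move/(bij_inj hF)/eqP; rewrite -{2}(addr0 x) => /eqP /addrI //.
set T1 := [set x in T | (x \notin P) && (x + a \in P)].
set Q := [set x in T | (x \notin P) && (x + a \notin P)].
have hT : T = (T :&: P) :|: (T1 :|: Q).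
  apply/setP => x; rewrite !inE.
  by case: (cDer c a F x == b); case: (x \in P); case: (x + a \in P).
have hT1 : (#|T1| <= #|P :\: T|)%N.
  rewrite -(card_imset T1 (addIr a)); apply: subset_leq_card.
  apply/subsetP => y /imsetP [x]; rewrite !inE => /andP [xT /andP [xP xaP]] ->.
  rewrite xaP andbT; apply/negP => xaT.
  by move: (key x xT xaT) xP xaP => ->; rewrite addr0 => /negP.
pose p : {poly K} := \poly_(i < 3) [:: -(c * a); b * a - 1 - c; b]`_i.
have hp0 : p != 0.
  apply/negP => /eqP hp.
  have h2 : p`_2 = b by rewrite coef_poly.
  have h1 : p`_1 = b * a - 1 - c by rewrite coef_poly.
  move: h1 h2; rewrite hp !coef0 => h1 h2; move: h1; rewrite -h2 mul0r sub0r.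
  by move/eqP; rewrite eq_sym -opprD oppr_eq0 (negbTE c1').
have hQ : (#|Q| <= 2)%N.
  rewrite cardE; have := max_poly_roots hp0 (rs := enum Q).
  rewrite enum_uniq => /(_ _ isT) h.
  have hs : (size p <= 3)%N by exact: size_poly.
  suff /h H : all (root p) (enum Q) by rewrite -ltnS (leq_trans H hs).
  apply/allP => x; rewrite mem_enum !inE /cDer => /andP [/eqP e /andP [xP xaP]].
  have x0 : x != 0 by apply: contraNneq xP => ->.
  have xa0 : x + a != 0 by apply: contraNneq xaP => ->.
  rewrite (hFP _ xP) (hFP _ xaP) !(@Inv_nz _ _ hn hK) // in e.
  rewrite /root horner_poly !big_ord_recl big_ord0 /=.
  rewrite (_ : bump 0 (bump 0 0) = 2%N) // (_ : bump 0 0 = 1%N) // expr0 expr1 mulr1 addr0 -e; apply/eqP; field.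
  by rewrite x0 xa0.
rewrite hT.
apply: leq_trans (leq_card_setU _ _) _.
rewrite -(cardsID T P) setIC -addnA leq_add //.
apply: leq_trans (leq_card_setU _ _) _.
exact: leq_add.
Qed.
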